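(* For every integer $n$ (with $q\neq 0$ if $n<0$), $$h_{n+1}^2-qh_n^2=d^2\left[\left(b^2-a^2q\right)u_{2n+1}-aq\left(2b-ap\right)u_{2n}\right].$$
   Context: Let $p,q,a,b$ be complex numbers and let $d=\sqrt{p^2-4q}$. The sequence $(u_n)$ is defined by $u_0=0$, $u_1=1$, $u_n=pu_{n-1}-qu_{n-2}$. The Horadam-Lucas sequence $(h_n)$ is defined by $h_0=2b-ap$, $h_1=bp-2aq$, $h_n=ph_{n-1}-qh_{n-2}$. When $q\neq0$, both are extended to negative indices by $x_{n-2}=(px_{n-1}-x_n)/q$. *)

(* Defs.v *)
From HB Require Import structures.
From mathcomp Require Import all_boot all_order all_algebra.
From mathcomp Require Import complex.
From mathcomp Require Import reals.
Set Implicit Arguments. Unset Strict Implicit. Unset Printing Implicit Defensive.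
Import Order.TTheory GRing.Theory Num.Theory.
Local Open Scope ring_scope.

Section Seq2.
Variable F : fieldType.
Variables (p q x0 x1 : F).

Fixpoint fwd2 (n : nat) : F * F :=
  match n with
  | 0%N => (x0, x1)
  | n'.+1 => let: (a, b) := fwd2 n' in (b, p * b - q * a)
  end.

(* backward pairs (x_{-n}, x_{-n+1}) for n >= 0,
   via x_{k-2} = (p x_{k-1} - x_k) / q *)
Fixpoint bwd2 (n : nat) : F * F :=
  match n with
  | 0%N => (x0, x1)
  | n'.+1 => let: (a, b) := bwd2 n' in ((p * a - b) / q, a)
  end.

Definition seq2 (z : int) : F :=
  match z with
  | Posz n => (fwd2 n).1
  | Negz n => (bwd2 n.+1).1
  end.
End Seq2.

Definition useq (F : fieldType) (p q : F) : int -> F := seq2 p q 0 1.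

Definition hseq (F : fieldType) (p q a b : F) : int -> F :=
  seq2 p q (2 * b - a * p) (b * p - 2 * a * q).

(* Main.v *)
Require Import Defs.
From HB Require Import structures.
From mathcomp Require Import all_boot all_order all_algebra.
From mathcomp Require Import complex.
From mathcomp Require Import reals.
From mathcomp Require Import ring zify.
Import Order.TTheory GRing.Theory Num.Theory.
Set Implicit Arguments. Unset Strict Implicit.
Local Open Scope ring_scope.

Section Gen.
Variable F : fieldType.
Variables (p q : F).

Definition good (z : int) : bool := (0 <= z) || (q != 0).

Lemma goodD z m : good z -> good m -> good (z + m).
Proof.
rewrite /good; case: (q != 0); rewrite ?orbT // !orbF => hz hm.
by rewrite addr_ge0.
Qed.

Lemma good1 : good 1. Proof. by rewrite /good. Qed.
Lemma good0 : good 0. Proof. by rewrite /good lexx. Qed.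

Definition recur (f : int -> F) :=
  forall z, good z -> f (z + 2) = p * f (z + 1) - q * f z.

Lemma uniq_rec f g : recur f -> recur g -> f 0 = g 0 -> f 1 = g 1 ->
  forall z, good z -> f z = g z.
Proof.
move=> rf rg h0 h1.
have pos : forall n : nat, f n%:Z = g n%:Z /\ f (n%:Z + 1) = g (n%:Z + 1).
  elim=> [|n [IH1 IH2]]; first by rewrite add0r.
  split; first by rewrite -addn1 PoszD.
  have gn : good n%:Z by rewrite /good.
  have -> : (n.+1)%:Z + 1 = n%:Z + 2 by rewrite -addn1 PoszD -addrA.
  by rewrite rf // rg // IH1 IH2.
move=> z; case: z => [n0|n0] gz; first by case: (pos n0).
have qn0 : q != 0 by move: gz; rewrite /good.
have neg : forall n : nat, f (- n%:Z) = g (- n%:Z) /\ f (- n%:Z + 1) = g (- n%:Z + 1).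
  elim=> [|n [IH1 IH2]]; first by rewrite oppr0 add0r.
  have ez : - (n.+1)%:Z + 1 = - n%:Z by rewrite -addn1 PoszD opprD addrNK.
  split; last by rewrite ez.
  have gz' : good (- (n.+1)%:Z) by rewrite /good qn0 orbT.
  have e2 : - (n.+1)%:Z + 2 = - n%:Z + 1.
    by rewrite -addn1 PoszD opprD -addrA; congr (_ + _).
  have Ef := rf _ gz'; have Eg := rg _ gz'.
  rewrite e2 ez in Ef Eg.
  have -> : f (- (n.+1)%:Z) = (p * f (- n%:Z) - f (- n%:Z + 1)) / q.
    by rewrite Ef; field.
  have -> : g (- (n.+1)%:Z) = (p * g (- n%:Z) - g (- n%:Z + 1)) / q.
    by rewrite Eg; field.
  by rewrite IH1 IH2.
by rewrite NegzE; case: (neg n0.+1).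
Qed.

Section S2.
Variables x0 x1 : F.

Lemma fwd2S n : (fwd2 p q x0 x1 n.+1).1 = (fwd2 p q x0 x1 n).2.
Proof. by rewrite /=; case: (fwd2 p q x0 x1 n). Qed.

Lemma fwd2SS n : (fwd2 p q x0 x1 n.+1).2 =
   p * (fwd2 p q x0 x1 n).2 - q * (fwd2 p q x0 x1 n).1.
Proof. by rewrite /=; case: (fwd2 p q x0 x1 n). Qed.

Lemma bwd2S n : (bwd2 p q x0 x1 n.+1).1 =
   (p * (bwd2 p q x0 x1 n).1 - (bwd2 p q x0 x1 n).2) / q.
Proof. by rewrite /=; case: (bwd2 p q x0 x1 n). Qed.

Lemma bwd2S2 n : (bwd2 p q x0 x1 n.+1).2 = (bwd2 p q x0 x1 n).1.
Proof. by rewrite /=; case: (bwd2 p q x0 x1 n). Qed.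

Lemma seq2N (k : nat) : seq2 p q x0 x1 (- k%:Z) = (bwd2 p q x0 x1 k).1.
Proof. by case: k => [|k] //; rewrite -NegzE. Qed.

Lemma recur_seq2 : recur (seq2 p q x0 x1).
Proof.
move=> [n|n] gz.
  have -> : Posz n + 2 = Posz n.+2 by rewrite -[n.+2]addn2 PoszD.
  have -> : Posz n + 1 = Posz n.+1 by rewrite -[n.+1]addn1 PoszD.
  rewrite /seq2 !fwd2S fwd2SS; by [].
have qn0 : q != 0 by move: gz; rewrite /good.
case: n gz => [|m] gz.
  have -> : Negz 0 + 2 = 1 by [].
  have -> : Negz 0 + 1 = 0 by [].
  rewrite /seq2 /=; by field.
have e0 : Negz m.+1 = - (m.+2)%:Z by rewrite NegzE.
have e1 : Negz m.+1 + 1 = - (m.+1)%:Z by rewrite NegzE -addn1 PoszD opprD addrNK.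
have e2 : Negz m.+1 + 2 = - m%:Z.
  by rewrite NegzE -addn2 PoszD opprD addrNK.
rewrite e1 e2 e0 !seq2N (bwd2S m.+1) bwd2S2; by field.
Qed.
End S2.

Definition u := seq2 p q 0 1.

Lemma u0 : u 0 = 0. Proof. by []. Qed.
Lemma u1 : u 1 = 1. Proof. by []. Qed.
Lemma u2 : u 2 = p. Proof. by rewrite /u /seq2 /=; ring. Qed.

Lemma rec_comb (f g : int -> F) c1 c2 : recur f -> recur g ->
  recur (fun z => c1 * f z + c2 * g z).
Proof. move=> rf rg z gz; rewrite rf // rg //; ring. Qed.

Lemma rec_shift (f : int -> F) m : good m -> recur f -> recur (fun k => f (m + k)).
Proof.
move=> gm rf z gz /=; have := rf (m + z) (goodD gm gz); by rewrite -!addrA.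
Qed.

Lemma rec_u1 : recur (fun k => u (k + 1)).
Proof.
move=> z gz /=; have -> : z + 2 + 1 = z + 1 + 2 by ring.
exact: (recur_seq2 0 1 (goodD gz good1)).
Qed.

Lemma repr (f : int -> F) : recur f -> forall k, good k ->
  f k = f 1 * u k + f 0 * (u (k + 1) - p * u k).
Proof.
move=> rf k gk.
apply: (uniq_rec (f := f) (g := fun k => f 1 * u k + f 0 * (u (k + 1) - p * u k))) => //.
- have := rec_comb (f 1) (f 0) (recur_seq2 0 1) (rec_comb 1 (- p) rec_u1 (recur_seq2 0 1)).
  move=> H z gz; move: (H z gz) => /=; rewrite /u => E.
  rewrite [X in X = _](_ : _ = f 1 * seq2 p q 0 1 (z + 2) + f 0 * (1 * seq2 p q 0 1 (z + 2 + 1) + - p * seq2 p q 0 1 (z + 2))); last by ring.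
  rewrite E; ring.
- by rewrite u0 add0r u1; ring.
- by rewrite u1 u2; ring.
Qed.

Lemma addf (f : int -> F) m k : recur f -> good m -> good k ->
  f (m + k) = f (m + 1) * u k + f m * (u (k + 1) - p * u k).
Proof.
move=> rf gm gk.
have := repr (rec_shift gm rf) gk.
by rewrite /= addr0.
Qed.

End Gen.

Theorem mainTheorem8 (R : realType) (p q a b : R[i]) (n : int) :
  (n < 0 -> q != 0) ->
  let d := sqrtC (p ^+ 2 - 4 * q) in
  hseq p q a b (n + 1) ^+ 2 - q * hseq p q a b n ^+ 2 =
  d ^+ 2 * ((b ^+ 2 - a ^+ 2 * q) * useq p q (2 * n + 1)
            - a * q * (2 * b - a * p) * useq p q (2 * n)).
Proof.
move=> hn d; rewrite /d sqrtCK.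
have gn : good q n.
  rewrite /good; have [h|h] := leP 0 n; first by [].
  by rewrite (hn h) orbT.
have gn1 : good q (n + 1) := goodD gn (good1 q).
have ru := @recur_seq2 _ p q 0 1.
have rh := @recur_seq2 _ p q (2 * b - a * p) (b * p - 2 * a * q).
have Un2 := ru n gn.
have H0 := repr rh gn.
have H1 := repr rh gn1.
have A0 := addf ru gn gn.
have A1 := addf ru gn1 gn.
rewrite /hseq H0 H1 /useq.
have -> : 2 * n + 1 = n + 1 + n by ring.
have -> : 2 * n = n + n by ring.
rewrite A0 A1.
rewrite -!/(u p q) -!addrA [1 + 1]addrC in Un2 *.
rewrite /u !addrA in Un2 *.
rewrite Un2.
have -> : seq2 p q (2 * b - a * p) (b * p - 2 * a * q) 1 = b * p - 2 * a * q by [].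
have -> : seq2 p q (2 * b - a * p) (b * p - 2 * a * q) 0 = 2 * b - a * p by [].
ring.
Qed.
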